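(* Let $f \in L^2(0,L)$ and $\beta \in \mathbb{R}$. Let $u_0 \in V$ satisfy $a_0(u_0,v) = \int_0^L f v\,dx - \beta v(L)$ for all $v \in V$, and for $n = 1,2,\dots,m$ let $u_n \in V$ satisfy $$a_0(u_n,v) + \sum_{j=1}^{n} a_j(u_{n-j}, v) = 0 \quad \text{for all } v \in V.$$ Then for every $m \ge 1$, $$a_0(u_m, v) = (-1)^m a_m(u_0, v) \quad \text{for all } v \in V.$$
   Context: Let $L>0$ and let $\kappa:(0,L)\to\mathbb{R}$ be measurable with $0<\kappa_{\min}\le \kappa(x)\le \kappa_{\max}$ for a.e. $x$; set $\psi = \log \kappa \in L^\infty(0,L)$. $V = \{ v \in H^1(0,L) : v(0) = 0\}$. For integers $j \ge 0$ and $u,v \in V$, define $a_j(u,v) = \frac{1}{j!}\int_0^L \psi(x)^j\, u'(x)\, v'(x)\,dx$. *)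

(* Defs.v *)
From HB Require Import structures.
From mathcomp Require Import all_boot all_order all_algebra.
From mathcomp Require Import all_classical all_reals all_analysis.
Set Implicit Arguments. Unset Strict Implicit. Unset Printing Implicit Defensive.
Import Order.TTheory GRing.Theory Num.Theory.
Local Open Scope classical_set_scope.
Local Open Scope ring_scope.

Definition L2 (R : realType) (L : R) (g : R -> R) : Prop :=
  measurable_fun `]0, L[ g /\
  (@lebesgue_measure R).-integrable `]0, L[ (fun x => ((g x) ^+ 2)%:E).

(* [inV L u g] : u belongs to V = {v in H^1(0,L) : v(0) = 0}, with weak
   derivative g (an L^2(0,L) function); u is the (absolutely) continuous
   representative  u(x) = \int_0^x g  on [0,L]. *)
Definition inV (R : realType) (L : R) (u g : R -> R) : Prop :=
  L2 L g /\
  forall x : R, 0 <= x <= L -> u x = Rintegral (@lebesgue_measure R) `]0, x[ g.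

Definition psi (R : realType) (kappa : R -> R) : R -> R := fun x => ln (kappa x).

(* a_j(u,v) = 1/j! \int_0^L psi^j u' v', expressed through the weak
   derivatives du = u', dv = v'. *)
Definition aform (R : realType) (L : R) (kappa : R -> R) (j : nat)
  (du dv : R -> R) : R :=
  (j`!%:R)^-1 *
  Rintegral (@lebesgue_measure R) `]0, L[
    (fun x => psi kappa x ^+ j * du x * dv x).

(* Main.v *)
Require Import Defs.
From HB Require Import structures.
From mathcomp Require Import all_boot all_order all_algebra.
From mathcomp Require Import all_classical all_reals all_analysis.
From mathcomp Require Import ring lra measurable_realfun.
Import Order.TTheory GRing.Theory Num.Theory.
Local Open Scope classical_set_scope.
Local Open Scope ring_scope.

Definition cc (R : realType) (k : nat) : R := (-1) ^+ k / (k`!)%:R.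

Lemma comb (R : realType) n : (0 < n)%N ->
  \sum_(0 <= j < n.+1) ((j`!%:R)^-1 * cc R (n-j)) = 0 :> R.
Proof.
move=> n0; rewrite /cc.
have H : ((-1) + 1 : R)^+n = 0 by rewrite addNr expr0n; case: n n0.
rewrite exprDn in H.
have nz k : (k`!)%:R != 0 :> R by rewrite pnatr_eq0 -lt0n fact_gt0.
transitivity ((n`!%:R)^-1 * \sum_(i<n.+1) ((-1)^+(n-i) * 1^+i) *+ 'C(n,i) : R);
  last by rewrite H mulr0.
rewrite big_mkord big_distrr; apply: eq_bigr => -[i /=]; rewrite ltnS => le_in _.
rewrite expr1n mulr1 -mulr_natr.
have := bin_fact le_in; move/(congr1 (fun k => k%:R : R)); rewrite !natrM => E.
rewrite -E; have := nz i; have := nz (n - i)%N => h1 h2.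
field. by rewrite h1 h2 pnatr_eq0 -lt0n bin_gt0 le_in.
Qed.

Lemma L2_psi (R : realType) (L : R) (kappa : R -> R) (kmin kmax : R) (h : R -> R) :
  0 < kmin ->
  measurable_fun `]0, L[ kappa ->
  {ae (@lebesgue_measure R), forall x, x \in `]0, L[ -> kmin <= kappa x <= kmax} ->
  L2 L h -> L2 L (fun x => psi kappa x * h x).
Proof.
move=> k0 mk Hae [mh ih].
have mpsi : measurable_fun `]0, L[ (psi kappa).
  exact: (measurableT_comp (@measurable_ln R) mk).
have mph : measurable_fun `]0, L[ (fun x => psi kappa x * h x).
  exact: measurable_funM.
split => //.
set M := ln kmin ^+ 2 + ln kmax ^+ 2.
have iM : (@lebesgue_measure R).-integrable `]0, L[ (fun x => (M * h x ^+ 2)%:E).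
  apply: (eq_integrable _ _ _ _ (integrableZl _ M ih)) => // x _; by rewrite EFinM.
move/integrableP: iM => [_ Hfin].
apply/integrableP; split.
  apply/measurable_EFinP; exact: measurable_funX.
apply: le_lt_trans Hfin; apply: ae_ge0_le_integral => //.
- apply/measurableT_comp => //; apply/measurable_EFinP; exact: measurable_funX.
- apply/measurableT_comp => //; apply/measurable_EFinP.
  apply: measurable_funM => //; exact: measurable_funX.
case: Hae => N [mN N0 sub]; exists N; split => // x /= nP; apply: sub => /= H.
apply: nP => Dx.
have /andP[k1 k2] := H Dx.
have kp : 0 < kappa x by apply: lt_le_trans k1.
have l1 : ln kmin <= ln (kappa x) by rewrite ler_ln ?posrE.
have l2 : ln (kappa x) <= ln kmax.
  by rewrite ler_ln ?posrE // (lt_le_trans k0) // (le_trans k1).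
rewrite /psi /= lee_fin !ger0_norm ?exprn_even_ge0 //; last first.
  apply: mulr_ge0; [rewrite /M; apply: addr_ge0|]; exact: sqr_ge0.
rewrite exprMn ler_wpM2r ?sqr_ge0 // /M.
have hb := sqr_ge0 (ln kmax); have ha := sqr_ge0 (ln kmin).
case: (lerP 0 (ln (kappa x))) => hp; nra.
Qed.

Lemma L2_S (R : realType) (L : R) (kappa : R -> R) (kmin kmax : R) (h : R -> R) :
  0 < kmin ->
  measurable_fun `]0, L[ kappa ->
  {ae (@lebesgue_measure R), forall x, x \in `]0, L[ -> kmin <= kappa x <= kmax} ->
  L2 L h -> forall j, L2 L (fun x => psi kappa x ^+ j * h x).
Proof.
move=> k0 mk Hae Lh; elim=> [|j IH].
  by rewrite (_ : (fun x => _) = h) //; apply/funext => x; rewrite expr0 mul1r.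
rewrite (_ : (fun x => _) = (fun x => psi kappa x * (psi kappa x ^+ j * h x))).
  exact: (@L2_psi R L kappa kmin kmax (fun x => psi kappa x ^+ j * h x) k0 mk Hae IH).
by apply/funext => x; rewrite exprS mulrA.
Qed.

Theorem lemma4 (R : realType) (L : R) (kappa : R -> R) (kmin kmax : R)
  (f : R -> R) (beta : R) (m : nat) (u du : nat -> R -> R) :
  0 < L ->
  0 < kmin ->
  measurable_fun `]0, L[ kappa ->
  {ae (@lebesgue_measure R), forall x, x \in `]0, L[ -> kmin <= kappa x <= kmax} ->
  L2 L f ->
  (forall n, (n <= m)%N -> inV L (u n) (du n)) ->
  (forall v dv : R -> R, inV L v dv ->
     aform L kappa 0 (du 0%N) dv =
     Rintegral (@lebesgue_measure R) `]0, L[ (fun x => f x * v x) - beta * v L) ->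
  (forall n, (1 <= n <= m)%N -> forall v dv : R -> R, inV L v dv ->
     aform L kappa 0 (du n) dv +
     \sum_(1 <= j < n.+1) aform L kappa j (du (n - j)%N) dv = 0) ->
  (1 <= m)%N ->
  forall v dv : R -> R, inV L v dv ->
    aform L kappa 0 (du m) dv = (-1) ^+ m * aform L kappa m (du 0%N) dv.
Proof.
move=> L0 k0 mk Hae Lf HV H0 Hrec m1.
pose I := fun g : R -> R => Rintegral (@lebesgue_measure R) `]0, L[ g.
pose S := fun h : R -> R => forall j, L2 L (fun x => psi kappa x ^+ j * h x).
have Smul : forall h i, S h -> S (fun x => psi kappa x ^+ i * h x).
  move=> h i Sh j; rewrite (_ : (fun x => _) = (fun x => psi kappa x ^+ (j + i) * h x)).
    exact: Sh.
  by apply/funext => x; rewrite exprD mulrA.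
have Q : forall n, (n <= m)%N -> forall h, S h ->
    I (fun x => psi kappa x ^+ 0 * du n x * h x) =
    cc R n * I (fun x => psi kappa x ^+ n * du 0%N x * h x).
  elim/ltn_ind => n IH nm h Sh.
  case: n IH nm => [|n] IH nm.
    by rewrite /cc expr0 fact0 divr1 mul1r.
  have Lh : L2 L h.
    by have := Sh 0%N; rewrite (_ : (fun x => _) = h) //; apply/funext => x; rewrite expr0 mul1r.
  have Hr := Hrec n.+1 (nm : (1 <= n.+1 <= m)%N)
    (fun x => Rintegral (@lebesgue_measure R) `]0, x[ h) h (conj Lh (fun x _ => erefl)).
  set J := I (fun x => psi kappa x ^+ n.+1 * du 0%N x * h x).
  have Hs : \sum_(1 <= j < n.+2) aform L kappa j (du (n.+1 - j)%N) h =
      (\sum_(1 <= j < n.+2) ((j`!%:R)^-1 * cc R (n.+1 - j))) * J.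
    rewrite big_distrl; apply: eq_big_nat => j /andP[j1 j2]; rewrite /aform /=.
    have E1 : (fun x => psi kappa x ^+ j * du (n.+1 - j)%N x * h x) =
        (fun x => psi kappa x ^+ 0 * du (n.+1 - j)%N x * (psi kappa x ^+ j * h x)).
      by apply/funext => x; rewrite expr0; ring.
    have lt1 : (n.+1 - j < n.+1)%N by rewrite ltn_subrL j1.
    have le1 : (n.+1 - j <= m)%N by apply: leq_trans nm; apply: leq_subr.
    have := IH (n.+1 - j)%N lt1 le1 _ (Smul h j Sh); rewrite /I => IHj.
    rewrite E1 IHj.
    have E2 : (fun x => psi kappa x ^+ (n.+1 - j) * du 0%N x * (psi kappa x ^+ j * h x)) =
        (fun x => psi kappa x ^+ n.+1 * du 0%N x * h x).
      apply/funext => x.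
      have -> : psi kappa x ^+ n.+1 = psi kappa x ^+ (n.+1 - j) * psi kappa x ^+ j.
        by rewrite -exprD subnK // -ltnS.
      ring.
    by rewrite E2 mulrA.
  have C := comb R n.+1 (ltn0Sn n).
  rewrite big_ltn // subn0 in C.
  rewrite Hs /aform fact0 invr1 mul1r in Hr.
  rewrite /= fact0 invr1 mul1r in C.
  have -> : I (fun x => psi kappa x ^+ 0 * du n.+1 x * h x) =
     - ((\sum_(1 <= j < n.+2) ((j`!%:R)^-1 * cc R (n.+1 - j))) * J).
    by apply/eqP; rewrite -addr_eq0; apply/eqP; exact: Hr.
  have -> : \sum_(1 <= j < n.+2) ((j`!%:R)^-1 * cc R (n.+1 - j)) = - cc R n.+1.
    by apply/eqP; rewrite -addr_eq0 addrC; apply/eqP; exact: C.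
  by rewrite mulNr opprK.
move=> v dv [Ldv _].
rewrite /aform fact0 invr1 mul1r.
have := Q m (leqnn m) dv (@L2_S R L kappa kmin kmax dv k0 mk Hae Ldv); rewrite /I => ->.
by rewrite /cc mulrA.
Qed.
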